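(* Consider the system \[ \begin{aligned} \dot S_h(t)&=\beta_h-C_{vh}\frac{I_v(t)}{N_v(t)}S_h(t)-\mu_hS_h(t),\\ \dot I_h(t)&=C_{vh}\frac{I_v(t-\tau)}{N_v(t-\tau)}S_h(t-\tau)-\mu_hI_h(t),\\ \dot S_v(t)&=\beta_v-C_{hv}I_h(t)S_v(t)-\mu_vS_v(t),\\ \dot I_v(t)&=C_{hv}I_h(t)S_v(t)-\mu_vI_v(t), \end{aligned} \] with $N_v=S_v+I_v$, positive parameters $\beta_h,\beta_v,\mu_h,\mu_v,C_{vh},C_{hv}$ and $\tau\ge0$. Let $R_0=\sqrt{\dfrac{C_{vh}C_{hv}\beta_h}{\mu_h^2\mu_v}}$. Then the system has a unique endemic equilibrium, i.e. an equilibrium $E^*=(S_h^*,I_h^*,S_v^*,I_v^* )^T$ with all four components positive, if and only if $R_0>1$. *)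

(* Defs.v *)
From mathcomp Require Import all_boot all_order all_algebra.
Set Implicit Arguments. Unset Strict Implicit. Unset Printing Implicit Defensive.
Import Order.TTheory GRing.Theory Num.Theory.
Local Open Scope ring_scope.

Definition state (R : Type) := (R * R * R * R)%type.

Definition Sh {R : Type} (x : state R) := x.1.1.1.
Definition Ih {R : Type} (x : state R) := x.1.1.2.
Definition Sv {R : Type} (x : state R) := x.1.2.
Definition Iv {R : Type} (x : state R) := x.2.
Definition Nv {R : nmodType} (x : state R) := Sv x + Iv x.

(* Right-hand side of the delay system: [x] is the state at time t,
   [xd] the state at time t - tau. *)
Definition vfield (R : fieldType) (betah betav muh muv Cvh Chv : R)
  (x xd : state R) : state R :=
  ( betah - Cvh * (Iv x / Nv x) * Sh x - muh * Sh x,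
    Cvh * (Iv xd / Nv xd) * Sh xd - muh * Ih x,
    betav - Chv * Ih x * Sv x - muv * Sv x,
    Chv * Ih x * Sv x - muv * Iv x ).

(* An equilibrium is a constant solution: the vector field vanishes when
   both the current and the delayed state equal E. *)
Definition is_equilibrium (R : fieldType) (betah betav muh muv Cvh Chv : R)
  (E : state R) : Prop :=
  vfield betah betav muh muv Cvh Chv E E = (0, 0, 0, 0).

Definition is_endemic_equilibrium (R : numFieldType)
  (betah betav muh muv Cvh Chv : R) (E : state R) : Prop :=
  is_equilibrium betah betav muh muv Cvh Chv E /\
  0 < Sh E /\ 0 < Ih E /\ 0 < Sv E /\ 0 < Iv E.

Definition R0 (R : rcfType) (betah muh muv Cvh Chv : R) : R :=
  Num.sqrt (Cvh * Chv * betah / (muh ^+ 2 * muv)).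

(* Main.v *)
Require Import Defs.
From mathcomp Require Import all_boot all_order all_algebra.
From mathcomp Require Import lra ring.
Import Order.TTheory GRing.Theory Num.Theory.
Local Open Scope ring_scope.

Section Aux.
Variables (R : rcfType) (betah betav muh muv Cvh Chv : R).
Hypotheses (hbh : 0 < betah) (hbv : 0 < betav) (hmh : 0 < muh) (hmv : 0 < muv)
  (hCvh : 0 < Cvh) (hChv : 0 < Chv).

Definition n0 := betav / muv.
Definition q0 := (betah * (Chv * Cvh) - muh ^+ 2 * muv) /
                 (muh * muv * Cvh + betah * (Chv * Cvh)).
Definition sh0 := betah / (muh + Cvh * q0).
Definition ih0 := Cvh * q0 * sh0 / muh.
Definition iv0 := n0 * q0.
Definition sv0 := n0 - iv0.

Lemma endemic_char (E : state R) :
  is_endemic_equilibrium betah betav muh muv Cvh Chv E ->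
  0 < betah * (Chv * Cvh) - muh ^+ 2 * muv /\ E = (sh0, ih0, sv0, iv0).
Proof.
case: E => [[[sh ih] sv] iv].
rewrite /is_endemic_equilibrium /is_equilibrium /vfield /Sh /Ih /Sv /Iv /Nv /=.
case=> [[e1 e2 e3 e4]] [psh [pih [psv piv]]].
have pn : 0 < sv + iv by lra.
set q := iv / (sv + iv) in e1 e2.
have hq : iv = q * (sv + iv) by rewrite /q mulfVK // gt_eqF.
have nE : sv + iv = n0.
  rewrite /n0; apply: (mulIf (lt0r_neq0 hmv)); rewrite mulfVK ?gt_eqF //; lra.
have q0' : 0 < q by rewrite /q divr_gt0.
have q1 : q < 1 by rewrite /q ltr_pdivrMr // mul1r; lra.
have h4 : Chv * ih * (1 - q) = muv * q.
  apply: (mulIf (lt0r_neq0 pn)).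
  have -> : Chv * ih * (1 - q) * (sv + iv) = Chv * ih * sv.
    transitivity (Chv * ih * ((sv + iv) - q * (sv + iv))); first ring.
    rewrite -hq; ring.
  have : Chv * ih * sv = muv * iv by lra.
  by move=> ->; rewrite -mulrA -hq.
have shih : sh + ih = betah / muh.
  apply: (mulIf (lt0r_neq0 hmh)); rewrite mulfVK ?gt_eqF //; lra.
have key : Chv * Cvh * sh * (1 - q) = muh * muv.
  apply: (mulIf (lt0r_neq0 q0')).
  have : Cvh * q * sh = muh * ih by lra.
  move=> h2; rewrite -[RHS]mulrA -h4.
  have -> : Chv * Cvh * sh * (1 - q) * q = Chv * (1 - q) * (Cvh * q * sh) by ring.
  rewrite h2; ring.
have shE : sh = betah / muh - ih by lra.
have lin : q * (muh * muv * Cvh + betah * (Chv * Cvh)) =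
           betah * (Chv * Cvh) - muh ^+ 2 * muv.
  have h2 : Cvh * q * sh = muh * ih by lra.
  have h5 : sh * (muh + Cvh * q) = betah.
    have : muh * sh + muh * ih = betah.
      rewrite -mulrDr shih mulrC mulfVK ?gt_eqF //.
    lra.
  have : Chv * Cvh * (sh * (muh + Cvh * q)) * (1 - q) = muh * muv * (muh + Cvh * q).
    rewrite -key; ring.
  rewrite h5 => h6.
  have : Chv * Cvh * betah * (1 - q) = muh * muv * (muh + Cvh * q) by [].
  move=> h7; rewrite expr2; lra.
have pd : 0 < muh * muv * Cvh + betah * (Chv * Cvh) by
  apply: addr_gt0; apply: mulr_gt0 => //; apply: mulr_gt0.
have qE : q = q0.
  by rewrite /q0 -lin mulfK ?gt_eqF.
split.
  by rewrite -lin; apply: mulr_gt0.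
have h5 : sh * (muh + Cvh * q) = betah.
  have : muh * sh + muh * ih = betah.
    rewrite -mulrDr shih mulrC mulfVK ?gt_eqF //.
  have : Cvh * q * sh = muh * ih by lra.
  lra.
have pm : 0 < muh + Cvh * q by apply: addr_gt0 => //; apply: mulr_gt0.
have shE' : sh = sh0 by rewrite /sh0 -qE -h5 mulfK ?gt_eqF.
have ihE : ih = ih0.
  rewrite /ih0 -qE -shE'.
  have : Cvh * q * sh = muh * ih by lra.
  by move=> ->; rewrite mulrC mulKf ?gt_eqF.
have ivE : iv = iv0 by rewrite /iv0 -qE -nE mulrC -hq.
have svE : sv = sv0 by rewrite /sv0 -ivE -nE; ring.
by rewrite shE' ihE svE ivE.
Qed.

Lemma endemic_exists :
  0 < betah * (Chv * Cvh) - muh ^+ 2 * muv ->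
  is_endemic_equilibrium betah betav muh muv Cvh Chv (sh0, ih0, sv0, iv0).
Proof.
move=> K.
have pd : 0 < muh * muv * Cvh + betah * (Chv * Cvh) by
  apply: addr_gt0; apply: mulr_gt0 => //; apply: mulr_gt0.
have lin : q0 * (muh * muv * Cvh + betah * (Chv * Cvh)) =
           betah * (Chv * Cvh) - muh ^+ 2 * muv by rewrite /q0 mulfVK ?gt_eqF.
have pq : 0 < q0 by rewrite /q0 divr_gt0.
have q1 : q0 < 1.
  rewrite /q0 ltr_pdivrMr // mul1r.
  have : 0 < muh * muv * Cvh by rewrite !mulr_gt0.
  have : 0 < muh ^+ 2 * muv by rewrite mulr_gt0 // exprn_gt0.
  lra.
have pn : 0 < n0 by rewrite /n0 divr_gt0.
have pm : 0 < muh + Cvh * q0 by apply: addr_gt0 => //; apply: mulr_gt0.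
have psh : 0 < sh0 by rewrite /sh0 divr_gt0.
have pih : 0 < ih0 by rewrite /ih0 divr_gt0 //; apply: mulr_gt0 => //; apply: mulr_gt0.
have piv : 0 < iv0 by rewrite /iv0 mulr_gt0.
have psv : 0 < sv0.
  rewrite /sv0 /iv0.
  have -> : n0 - n0 * q0 = n0 * (1 - q0) by ring.
  by rewrite mulr_gt0 // subr_gt0.
have nE : sv0 + iv0 = n0 by rewrite /sv0; ring.
have qE : iv0 / (sv0 + iv0) = q0 by rewrite nE /iv0 mulrAC divff ?gt_eqF // mul1r.
have h5 : sh0 * (muh + Cvh * q0) = betah by rewrite /sh0 mulfVK ?gt_eqF.
have h2 : Cvh * q0 * sh0 = muh * ih0 by rewrite /ih0 [RHS]mulrC mulfVK ?gt_eqF.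
have h4 : Chv * ih0 * (1 - q0) = muv * q0.
  apply: (mulIf (lt0r_neq0 hmh)).
  apply: (mulIf (lt0r_neq0 pm)).
  have -> : Chv * ih0 * (1 - q0) * muh * (muh + Cvh * q0) =
            Chv * (1 - q0) * q0 * Cvh * (sh0 * (muh + Cvh * q0)).
    have -> : Chv * ih0 * (1 - q0) * muh * (muh + Cvh * q0) =
              Chv * (1 - q0) * (muh + Cvh * q0) * (muh * ih0) by ring.
    rewrite -h2; ring.
  rewrite h5.
  have e : Chv * Cvh * betah * (1 - q0) = muh * muv * (muh + Cvh * q0).
    rewrite expr2 in lin; lra.
  have -> : Chv * (1 - q0) * q0 * Cvh * betah = q0 * (Chv * Cvh * betah * (1 - q0)) by ring.
  rewrite e; ring.
have h4' : Chv * ih0 * sv0 = muv * iv0.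
  rewrite /sv0 /iv0.
  have -> : Chv * ih0 * (n0 - n0 * q0) = n0 * (Chv * ih0 * (1 - q0)) by ring.
  rewrite h4; ring.
have hn : muv * n0 = betav by rewrite /n0 mulrC mulfVK ?gt_eqF.
rewrite /is_endemic_equilibrium /is_equilibrium /vfield /Sh /Ih /Sv /Iv /Nv /=.
rewrite qE; split; last by [].
congr (_, _, _, _).
- have : muh * sh0 + Cvh * q0 * sh0 = betah by rewrite -h5; ring.
  lra.
- lra.
- have : muv * sv0 + muv * iv0 = betav by rewrite -hn -nE; ring.
  lra.
- lra.
Qed.

End Aux.

Theorem lemma1 (R : rcfType) (betah betav muh muv Cvh Chv tau : R)
  (hbh : 0 < betah) (hbv : 0 < betav) (hmh : 0 < muh) (hmv : 0 < muv)
  (hCvh : 0 < Cvh) (hChv : 0 < Chv) (htau : 0 <= tau) :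
  (exists! E : state R, is_endemic_equilibrium betah betav muh muv Cvh Chv E)
  <-> 1 < R0 betah muh muv Cvh Chv.
Proof.
have pden : 0 < muh ^+ 2 * muv by rewrite mulr_gt0 // exprn_gt0.
have eqv : (1 < Cvh * Chv * betah / (muh ^+ 2 * muv)) =
           (0 < betah * (Chv * Cvh) - muh ^+ 2 * muv).
  rewrite ltr_pdivlMr // mul1r subr_gt0.
  by congr (_ < _); ring.
rewrite /R0; split.
- move=> [E [HE _]].
  have [K _] := @endemic_char R betah betav muh muv Cvh Chv hbh hmh hmv hCvh hChv _ HE.
  have p1 : 1 < Cvh * Chv * betah / (muh ^+ 2 * muv) by rewrite eqv.
  by rewrite -sqrtr1 ltr_sqrt // (lt_trans ltr01 p1).
- move=> H.
  have px : 0 < Cvh * Chv * betah / (muh ^+ 2 * muv).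
    by rewrite -sqrtr_gt0 (lt_trans ltr01 H).
  have K : 0 < betah * (Chv * Cvh) - muh ^+ 2 * muv.
    by rewrite -eqv -(ltr_sqrt _ px) sqrtr1.
  exists (sh0 R betah muh muv Cvh Chv, ih0 R betah muh muv Cvh Chv,
          sv0 R betah betav muh muv Cvh Chv, iv0 R betah betav muh muv Cvh Chv).
  split; first exact: (@endemic_exists R betah betav muh muv Cvh Chv hbh hbv hmh hmv hCvh hChv K).
  move=> E HE.
  by have [_ ->] := @endemic_char R betah betav muh muv Cvh Chv hbh hmh hmv hCvh hChv _ HE.
Qed.
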